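(* With the notation below, every real-valued $f\in\mathcal K(C_p)$ admits a decomposition $f(\lambda)=\sum_i\Theta_{h_i,\mu_i}(\lambda)-\sum_j\Theta_{h'_j,\mu'_j}(\lambda)-h\lambda+c$ with finitely many $(h_i,\mu_i),(h'_j,\mu'_j)\in H_p^+\times\mathbb{R}_+^*$, $c\in\mathbb{R}$, $h\in H_p$, where $(p-1)h=\sum_ih_i-\sum_jh'_j$, $h_i\leq\mu_i<ph_i$ and $h'_j\leq\mu'_j<ph'_j$.
   Context: Let $p$ be a prime, $H_p=\mathbb{Z}[1/p]$, $H_p^+=H_p\cap(0,\infty)$. $\mathcal K(C_p)$ is the set of continuous piecewise affine functions $f:(0,\infty)\to\mathbb{R}$ (finitely many breakpoints on compact subintervals) with slopes in $H_p$ and $f(p\lambda)=f(\lambda)$, together with the constant $-\infty$. Let $\theta(\lambda)=\sum_{m\geq0}\max(0,1-p^m\lambda)+\sum_{m\geq1}\max(0,p^{-m}\lambda-1)$ for $\lambda>0$, and $\Theta_{h,\mu}(\lambda)=\mu\,\theta(\mu^{-1}h\lambda)$ for $h\in H_p^+$, $\mu>0$. *)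

(* Defs.v *)
From Stdlib Require Import Reals ZArith Znumtheory List.
From Coquelicot Require Import Coquelicot.
Open Scope R_scope.

Definition in_Hp (p : nat) (x : R) : Prop :=
  exists (k : Z) (n : nat), x = IZR k / (INR p) ^ n.

Definition piecewise_affine_Hp (p : nat) (f : R -> R) : Prop :=
  forall a b : R, 0 < a -> a <= b ->
    exists (n : nat) (x : nat -> R),
      x 0%nat = a /\ x n = b /\
      (forall i : nat, (i < n)%nat -> x i < x (S i)) /\
      (forall i : nat, (i < n)%nat ->
         exists s c : R, in_Hp p s /\
           forall y : R, x i <= y <= x (S i) -> f y = s * y + c).

(* Real-valued elements of K(C_p) (i.e. other than the constant -oo). *)
Definition K_Cp_real (p : nat) (f : R -> R) : Prop :=
  (forall x : R, 0 < x -> continuity_pt f x) /\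
  piecewise_affine_Hp p f /\
  (forall l : R, 0 < l -> f (INR p * l) = f l).

Definition theta (p : nat) (l : R) : R :=
  Series (fun m : nat => Rmax 0 (1 - (INR p) ^ m * l)) +
  Series (fun m : nat => Rmax 0 (l / (INR p) ^ (S m) - 1)).

Definition Theta (p : nat) (h mu l : R) : R := mu * theta p (/ mu * h * l).

Definition admissible_pair (p : nat) (hm : R * R) : Prop :=
  in_Hp p (fst hm) /\ 0 < fst hm /\ 0 < snd hm /\
  fst hm <= snd hm /\ snd hm < INR p * fst hm.

Definition sum_Theta (p : nat) (L : list (R * R)) (l : R) : R :=
  fold_right (fun hm acc => Theta p (fst hm) (snd hm) l + acc) 0 L.

Definition sum_h (L : list (R * R)) : R :=
  fold_right (fun hm acc => fst hm + acc) 0 L.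

(* Main.v *)
Require Import Defs.
From Stdlib Require Import Reals ZArith Znumtheory List.
From Coquelicot Require Import Coquelicot.
From Stdlib Require Import Lia Lra Psatz.
Open Scope R_scope.

Lemma ex_series_ev0 (a : nat -> R) (N : nat) :
  (forall n, (n >= N)%nat -> a n = 0) -> ex_series a.
Proof.
  intros H. apply (proj2 (ex_series_incr_n a N)).
  apply ex_series_ext with (a := fun n => (/2)^n * 0).
  - intros n. rewrite H by lia. apply Rmult_0_r.
  - apply ex_series_scal_r. apply ex_series_geom. rewrite Rabs_pos_eq; lra.
Qed.

Lemma Series_zero (a : nat -> R) : (forall n, a n = 0) -> Series a = 0.
Proof.
  intros H. rewrite (Series_ext a (fun n => 0 * 1)) by (intros; rewrite H; ring).
  rewrite Series_scal_l. ring.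
Qed.

Lemma Rmax0_l (t : R) : t <= 0 -> Rmax 0 t = 0.
Proof. intros; unfold Rmax; destruct Rle_dec; lra. Qed.
Lemma Rmax0_r (t : R) : 0 <= t -> Rmax 0 t = t.
Proof. intros; unfold Rmax; destruct Rle_dec; lra. Qed.

Lemma ex_A (P l : R) : 1 < P -> 0 < l -> ex_series (fun m => Rmax 0 (1 - P ^ m * l)).
Proof.
  intros HP Hl. destruct (Pow_x_infinity P) with (b := / l) as [N HN].
  { rewrite Rabs_pos_eq; lra. }
  apply (ex_series_ev0 _ N). intros n Hn. apply Rmax0_l.
  specialize (HN n Hn). rewrite Rabs_pos_eq in HN by (apply pow_le; lra).
  assert (/ l * l = 1) by (field; lra). nra.
Qed.

Lemma ex_C (P l : R) : 1 < P -> 0 < l -> ex_series (fun m => Rmax 0 (l / P ^ m - 1)).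
Proof.
  intros HP Hl. destruct (Pow_x_infinity P) with (b := l) as [N HN].
  { rewrite Rabs_pos_eq; lra. }
  apply (ex_series_ev0 _ N). intros n Hn. apply Rmax0_l.
  specialize (HN n Hn). rewrite Rabs_pos_eq in HN by (apply pow_le; lra).
  assert (0 < P ^ n) by (apply pow_lt; lra).
  assert (l / P ^ n <= 1); [|lra].
  apply (Rmult_le_reg_r (P ^ n)); auto. field_simplify; lra.
Qed.

Lemma theta_P (p : nat) (l : R) : 1 < INR p -> 0 < l ->
  theta p (INR p * l) = theta p l + l - 1.
Proof.
  intros HP Hl. unfold theta. set (P := INR p) in *.
  rewrite (Series_ext (fun m => Rmax 0 (1 - P ^ m * (P * l)))
             (fun k => (fun m => Rmax 0 (1 - P ^ m * l)) (S k)))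
    by (intros; simpl; f_equal; ring).
  rewrite (Series_ext (fun m => Rmax 0 (P * l / P ^ S m - 1))
             (fun m => Rmax 0 (l / P ^ m - 1))).
  2:{ intros; simpl; f_equal. field. split; [apply pow_nonzero|]; lra. }
  rewrite (Series_incr_1 (fun m => Rmax 0 (1 - P ^ m * l))) by (apply ex_A; lra).
  rewrite (Series_incr_1 (fun m => Rmax 0 (l / P ^ m - 1))) by (apply ex_C; lra).
  simpl.
  assert (Rmax 0 (l / 1 - 1) - Rmax 0 (1 - 1 * l) = l - 1).
  { replace (l / 1) with l by field. replace (1 * l) with l by ring.
    unfold Rmax; destruct Rle_dec; destruct Rle_dec; lra. }
  lra.
Qed.

Lemma theta_small (p : nat) (u : R) : 1 < INR p -> 1 < INR p * u -> u <= INR p ->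
  theta p u = Rmax 0 (1 - u).
Proof.
  intros HP H1 H2. unfold theta. set (P := INR p) in *.
  assert (Hz : forall m, Rmax 0 (1 - P ^ S m * u) = 0).
  { intros m. apply Rmax0_l. simpl. assert (1 <= P ^ m) by (apply pow_R1_Rle; lra). nra. }
  rewrite Series_incr_1.
  2:{ apply ex_series_incr_1. apply (ex_series_ev0 _ 0). intros; apply Hz. }
  rewrite (Series_zero (fun k => Rmax 0 (1 - P ^ S k * u))) by exact Hz.
  rewrite (Series_zero (fun m => Rmax 0 (u / P ^ S m - 1))).
  - simpl. replace (1 - 1 * u) with (1 - u) by ring. ring.
  - intros m. apply Rmax0_l. simpl. assert (1 <= P ^ m) by (apply pow_R1_Rle; lra).
    assert (0 < P * P ^ m) by nra.
    assert (u / (P * P ^ m) <= 1); [|lra].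
    apply (Rmult_le_reg_r (P * P ^ m)); auto. field_simplify; nra.
Qed.

Lemma IZRpow (p n : nat) : IZR (Z.of_nat p ^ Z.of_nat n) = INR p ^ n.
Proof. rewrite <- pow_IZR, <- INR_IZR_INZ. reflexivity. Qed.

Lemma Hp_add p x y : 0 < INR p -> in_Hp p x -> in_Hp p y -> in_Hp p (x + y).
Proof.
  intros HP [k1 [n1 ->]] [k2 [n2 ->]].
  exists (k1 * Z.of_nat p ^ Z.of_nat n2 + k2 * Z.of_nat p ^ Z.of_nat n1)%Z, (n1 + n2)%nat.
  rewrite plus_IZR, !mult_IZR, !IZRpow, pow_add.
  field. split; apply pow_nonzero; lra.
Qed.

Lemma Hp_mul p x y : 0 < INR p -> in_Hp p x -> in_Hp p y -> in_Hp p (x * y).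
Proof.
  intros HP [k1 [n1 ->]] [k2 [n2 ->]].
  exists (k1 * k2)%Z, (n1 + n2)%nat.
  rewrite !mult_IZR, pow_add.
  field. split; apply pow_nonzero; lra.
Qed.

Lemma Hp_opp p x : in_Hp p x -> in_Hp p (- x).
Proof.
  intros [k1 [n1 ->]]. exists (- k1)%Z, n1. rewrite opp_IZR. unfold Rdiv. ring.
Qed.

Lemma Hp_sub p x y : 0 < INR p -> in_Hp p x -> in_Hp p y -> in_Hp p (x - y).
Proof. intros. apply Hp_add; auto. apply Hp_opp; auto. Qed.

Lemma Hp_1 p : in_Hp p 1.
Proof. exists 1%Z, 0%nat. simpl. field. Qed.

Lemma Hp_P p : in_Hp p (INR p).
Proof. exists (Z.of_nat p), 0%nat. rewrite <- INR_IZR_INZ. simpl. field. Qed.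

Lemma Theta_hinge p h mu l : 1 < INR p -> admissible_pair p (h, mu) ->
  1 <= l <= INR p -> Theta p h mu l = Rmax 0 (mu - h * l).
Proof.
  intros HP [_ [Hh [Hm [H1 H2]]]] Hl; simpl in *. unfold Theta.
  set (P := INR p) in *.
  assert (Hu1 : 1 < P * (/ mu * h * l)).
  { apply (Rmult_lt_reg_r mu); auto. field_simplify; [|lra]. nra. }
  assert (Hu2 : / mu * h * l <= P).
  { apply (Rmult_le_reg_r mu); auto. field_simplify; [|lra]. nra. }
  rewrite theta_small by (unfold P; auto).
  assert (E : mu * (1 - / mu * h * l) = mu - h * l) by (field; lra).
  destruct (Rle_dec 0 (1 - / mu * h * l)) as [r|r].
  - rewrite (Rmax0_r (1 - _)) by auto. rewrite Rmax0_r; auto.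
    rewrite <- E. apply Rmult_le_pos; lra.
  - rewrite (Rmax0_l (1 - _)) by lra. rewrite Rmax0_l; [ring|].
    rewrite <- E. nra.
Qed.

Lemma Theta_P p h mu l : 1 < INR p -> 0 < h -> 0 < mu -> 0 < l ->
  Theta p h mu (INR p * l) = Theta p h mu l + h * l - mu.
Proof.
  intros HP Hh Hm Hl. unfold Theta.
  replace (/ mu * h * (INR p * l)) with (INR p * (/ mu * h * l)) by ring.
  rewrite theta_P; auto.
  - field. lra.
  - apply Rmult_lt_0_compat; [|lra]. apply Rmult_lt_0_compat; [|lra]. apply Rinv_0_lt_compat; lra.
Qed.

Definition sum_mu (L : list (R * R)) : R := fold_right (fun hm acc => snd hm + acc) 0 L.

Lemma sum_Theta_P p L l : 1 < INR p -> 0 < l -> List.Forall (admissible_pair p) L ->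
  sum_Theta p L (INR p * l) = sum_Theta p L l + sum_h L * l - sum_mu L.
Proof.
  intros HP Hl H. induction H as [|[h mu] L Ha HL IH]; simpl.
  - ring.
  - destruct Ha as [_ [Hh [Hm _]]]; simpl in *. rewrite Theta_P by auto. rewrite IH. ring.
Qed.

Theorem theorem5p12 (p : nat) (Hp : prime (Z.of_nat p)) (f : R -> R)
  (Hf : K_Cp_real p f) :
  exists (L1 L2 : list (R * R)) (h c : R),
    List.Forall (admissible_pair p) L1 /\
    List.Forall (admissible_pair p) L2 /\
    in_Hp p h /\
    (INR p - 1) * h = sum_h L1 - sum_h L2 /\
    forall l : R, 0 < l ->
      f l = sum_Theta p L1 l - sum_Theta p L2 l - h * l + c.
Proof.
  destruct Hf as [_ [Hpw Hper]].
  assert (HP2 : 2 <= INR p).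
  { rewrite INR_IZR_INZ. apply IZR_le. apply prime_ge_2; auto. }
  assert (HP : 1 < INR p) by lra. assert (HP0 : 0 < INR p) by lra.
  set (P := INR p) in *.
  destruct (Hpw 1 P) as [n [x [hx0 [hxn [hinc hpc]]]]]; try lra.
  assert (Hmono : forall k i, (i + k <= n)%nat -> x i <= x (i + k)%nat).
  { induction k; intros i Hi. { rewrite Nat.add_0_r; lra. }
    specialize (IHk i ltac:(lia)). specialize (hinc (i+k)%nat ltac:(lia)).
    replace (i + S k)%nat with (S (i + k)) by lia. lra. }
  assert (Hle : forall i j, (i <= j <= n)%nat -> x i <= x j).
  { intros i j Hij. replace j with (i + (j - i))%nat by lia. apply Hmono; lia. }
  assert (Hlt : forall i j, (i < j <= n)%nat -> x i < x j).
  { intros i j Hij. apply Rlt_le_trans with (x (S i)). apply hinc; lia. apply Hle; lia. }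
  assert (Hn : (1 <= n)%nat). { destruct n; [rewrite hx0 in hxn; lra | lia]. }
  assert (Inv : forall k, (1 <= k <= n)%nat -> exists L1 L2 s0 s C,
     List.Forall (admissible_pair p) L1 /\ List.Forall (admissible_pair p) L2 /\
     in_Hp p s0 /\ in_Hp p s /\ sum_h L1 - sum_h L2 = s - s0 /\
     (forall l, 1 <= l <= x k -> f l = sum_Theta p L1 l - sum_Theta p L2 l + s * l + C) /\
     (forall l, x (pred k) <= l <= P -> sum_Theta p L1 l - sum_Theta p L2 l = 0)).
  { induction k as [|k IH]; intros Hk; [lia|].
    destruct (Nat.eq_dec k 0) as [->|Hk0].
    - destruct (hpc 0%nat ltac:(lia)) as [s [c [Hs Hfc]]].
      exists nil, nil, s, s, c. simpl. repeat split; auto; try lra.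
      + intros l Hl. rewrite Hfc. ring. rewrite hx0. exact Hl.
      + intros; ring.
    - destruct (IH ltac:(lia)) as [L1 [L2 [s0 [s [C [HL1 [HL2 [Hs0 [Hs [Hsum [Hrep Hz]]]]]]]]]]].
      destruct (hpc k ltac:(lia)) as [s' [c' [Hs' Hfc]]].
      assert (Hxk1 : 1 < x k) by (rewrite <- hx0; apply Hlt; lia).
      assert (HxkP : x k < P) by (rewrite <- hxn; apply Hlt; lia).
      assert (HxkS : x k <= x (S k)) by (apply Hle; lia).
      assert (HxSP : x (S k) <= P) by (rewrite <- hxn; apply Hle; lia).
      assert (Hxpk : x (pred k) <= x k) by (apply Hle; lia).
      set (xk := x k) in *.
      set (d := s' - s).
      assert (Hd : in_Hp p d) by (apply Hp_sub; auto).
      set (a := d * d + 1). set (b := d * d + 1 - d).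
      assert (Ha : 0 < a) by (unfold a; nra). assert (Hb : 0 < b) by (unfold b; nra).
      assert (Hadm : forall e, 0 < e -> in_Hp p e -> admissible_pair p (e, e * xk)).
      { intros e He He'. unfold admissible_pair; simpl. fold P. repeat split; auto.
        - apply Rmult_lt_0_compat; lra.
        - rewrite <- (Rmult_1_r e) at 1. apply Rmult_le_compat_l; lra.
        - rewrite (Rmult_comm P e). apply Rmult_lt_compat_l; lra. }
      assert (HaH : in_Hp p a) by (unfold a; apply Hp_add; [exact HP0| apply Hp_mul; auto | apply Hp_1]).
      assert (HbH : in_Hp p b) by (unfold b; apply Hp_sub; auto).
      assert (Hhin : forall e l, 0 < e -> in_Hp p e -> 1 <= l <= P -> Theta p e (e * xk) l = Rmax 0 (e * xk - e * l)).
      { intros. apply Theta_hinge; auto. }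
      assert (Hfxk : f xk = s * xk + C).
      { rewrite Hrep by lra. specialize (Hz xk ltac:(lra)). lra. }
      exists ((a, a * xk) :: L1), ((b, b * xk) :: L2), s0, s', (C - d * xk).
      repeat split; auto.
      + simpl. unfold a, b, d in *. lra.
      + intros l Hl. simpl. rewrite !Hhin by (auto; lra).
        destruct (Rle_dec l xk) as [Hlk|Hlk].
        * rewrite !Rmax0_r by nra. rewrite Hrep by lra. unfold a, b, d. ring.
        * rewrite !Rmax0_l by nra. rewrite Hfc by lra.
          specialize (Hz l ltac:(lra)).
          assert (c' = s * xk + C - s' * xk). { rewrite <- Hfxk. rewrite Hfc by lra. ring. }
          unfold d. nra.
      + intros l Hl. change (x (pred (S k))) with xk in Hl. simpl. rewrite !Hhin by (auto; lra).
        rewrite !Rmax0_l by nra. specialize (Hz l ltac:(lra)). lra.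
  }
  destruct (Inv n ltac:(lia)) as [L1 [L2 [s0 [s [C [HL1 [HL2 [Hs0 [Hs [Hsum [Hrep _]]]]]]]]]]].
  rewrite hxn in Hrep.
  set (d := s0 - P * s).
  assert (Hd : in_Hp p d) by (apply Hp_sub; auto; apply Hp_mul; auto; apply Hp_P).
  set (a := d * d + 1). set (b := d * d + 1 - d).
  assert (Ha : 0 < a) by (unfold a; nra). assert (Hb : 0 < b) by (unfold b; nra).
  assert (HaH : in_Hp p a) by (unfold a; apply Hp_add; [exact HP0| apply Hp_mul; auto | apply Hp_1]).
  assert (HbH : in_Hp p b) by (unfold b; apply Hp_sub; auto).
  assert (Hadm : forall e, 0 < e -> in_Hp p e -> admissible_pair p (e, e)).
  { intros e He He'. unfold admissible_pair; simpl. fold P. repeat split; auto; nra. }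
  set (L1' := (a, a) :: L1). set (L2' := (b, b) :: L2).
  assert (HF1 : List.Forall (admissible_pair p) L1') by (constructor; auto).
  assert (HF2 : List.Forall (admissible_pair p) L2') by (constructor; auto).
  set (Sf := fun l => sum_Theta p L1' l - sum_Theta p L2' l - (- s) * l + C).
  assert (Hrep' : forall l, 1 <= l <= P -> f l = Sf l).
  { intros l Hl. unfold Sf, L1', L2'. simpl.
    rewrite !Theta_hinge by (auto; lra). rewrite !Rmax0_l by nra. rewrite Hrep by auto. ring. }
  assert (HshP : sum_h L1' - sum_h L2' = (P - 1) * (- s)) by (simpl; unfold a, b, d; lra).
  assert (HSP : forall l, 0 < l -> Sf (P * l) = Sf l + (sum_mu L2' - sum_mu L1')).
  { intros l Hl. unfold Sf. rewrite !sum_Theta_P by auto.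
    assert (E : sum_h L1' * l - sum_h L2' * l = (P - 1) * (- s) * l) by (rewrite <- HshP; ring).
    lra. }
  assert (Hmu : sum_mu L2' - sum_mu L1' = 0).
  { specialize (HSP 1 ltac:(lra)). rewrite Rmult_1_r in HSP.
    specialize (Hper 1 ltac:(lra)). rewrite Rmult_1_r in Hper.
    rewrite !Hrep' in Hper by lra. lra. }
  assert (HSP' : forall l, 0 < l -> Sf (P * l) = Sf l).
  { intros l Hl. rewrite HSP by auto. lra. }
  assert (Q : forall m l, 1 <= l * P ^ m -> l <= P ^ S m -> f l = Sf l).
  { induction m; intros l H1 H2.
    - simpl in *. apply Hrep'. lra.
    - assert (Hq : 1 <= P ^ m) by (apply pow_R1_Rle; lra). simpl in H1, H2.
      assert (HPq : 0 < P * P ^ m) by nra. set (q := P ^ m) in *. assert (Hl0 : 0 < l) by nra.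
      destruct (Rle_dec l (P * q)) as [Hl1|Hl1].
      + destruct (Rle_dec 1 (l * q)) as [Hl2|Hl2].
        * apply IHm; simpl; auto.
        * rewrite <- (Hper l) by auto. rewrite <- (HSP' l) by auto.
          assert (Hqq : 1 <= q * q) by nra.
          assert (l < q).
          { apply (Rmult_lt_reg_r q). lra. apply Rnot_le_lt in Hl2. lra. }
          apply IHm; simpl; fold q; nra.
      + set (mu := l / P). assert (El : l = P * mu) by (unfold mu; field; lra).
        assert (0 < mu) by (apply Rdiv_lt_0_compat; lra).
        rewrite El in H1, H2, Hl1 |- *. rewrite Hper by auto. rewrite HSP' by auto.
        assert (q < mu) by nra.
        apply IHm; simpl; fold q; nra. }
  exists L1', L2', (- s), C.
  split; [auto|]. split; [auto|]. split; [apply Hp_opp; auto|]. split; [lra|].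
  intros l Hl.
    destruct (Pow_x_infinity P) with (b := Rmax l (/ l)) as [N HN].
    { rewrite Rabs_pos_eq; lra. }
    specialize (HN N ltac:(lia)). rewrite Rabs_pos_eq in HN by (apply pow_le; lra).
    assert (H1 : l <= P ^ N) by (generalize (Rmax_l l (/ l)); lra).
    assert (H2 : / l <= P ^ N) by (generalize (Rmax_r l (/ l)); lra).
    apply (Q N).
    + assert (l * / l = 1) by (field; lra). nra.
    + simpl. assert (1 <= P ^ N) by (apply pow_R1_Rle; lra). nra.
Qed.
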